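(* $\mathfrak C_R \not\subseteq \mathfrak m^2$ if and only if $a_n \ge c_R$.
   Context: Let $k$ be a field and let $(R,\mathfrak m)$ be a complete local noetherian domain of dimension $1$ containing $k$ with $R/\mathfrak m = k$, with normalization $\overline R$ having residue field $k$, so $\overline R = k[[t]]$ and $R \subseteq k[[t]]$ is finite birational. Let $v$ be the $t$-adic valuation. For $A \subseteq k((t))$ let $v(A) = \{v(f): f\in A\setminus\{0\}\}$. The conductor is $\mathfrak C_R = \{x \in \overline R : x\overline R \subseteq R\} = t^{c_R}\overline R$, where $c_R$ is the conductor degree. The Herzog–Kunz sequence of $R$ is $v(\mathfrak m)\setminus v(\mathfrak m^2)$ listed increasingly as $a_1 < \cdots < a_n$. *)

(* Defs.v *)
(* Formal power series k[[t]] over a field k are modelled as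
   coefficient functions nat -> k (equality of series = equality of functions). *)
From HB Require Import structures.
From mathcomp Require Import all_boot all_order all_algebra.
From Stdlib Require Import List.
Set Implicit Arguments. Unset Strict Implicit. Unset Printing Implicit Defensive.
Import GRing.Theory.
Local Open Scope ring_scope.

Definition series (k : fieldType) := nat -> k.

Definition szero (k : fieldType) : series k := fun _ => 0.
Definition sconst (k : fieldType) (a : k) : series k :=
  fun n => if n is 0%N then a else 0.
Definition sadd (k : fieldType) (f g : series k) : series k := fun n => f n + g n.
Definition sopp (k : fieldType) (f : series k) : series k := fun n => - f n.
Definition smul (k : fieldType) (f g : series k) : series k :=
  fun n => \sum_(i < n.+1) f i * g (n - i)%N.

Definition sum_prods (k : fieldType) (ps : list (series k * series k)) : series k :=
  foldr (fun p acc => sadd (smul p.1 p.2) acc) (szero k) ps.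

Record subalgebra (k : fieldType) (R : series k -> Prop) : Prop := {
  sub_const : forall a : k, R (sconst a);
  sub_add : forall f g, R f -> R g -> R (sadd f g);
  sub_opp : forall f, R f -> R (sopp f);
  sub_mul : forall f g, R f -> R g -> R (smul f g) }.

Definition finite_over (k : fieldType) (R : series k -> Prop) : Prop :=
  exists gs : list (series k), forall f : series k,
    exists rs : list (series k),
      length rs = length gs /\ (forall r, In r rs -> R r) /\
      f = sum_prods (combine rs gs).

Definition birational (k : fieldType) (R : series k -> Prop) : Prop :=
  forall f : series k, exists a b, R a /\ R b /\ b <> szero k /\ smul f b = a.

Definition max_ideal (k : fieldType) (R : series k -> Prop) (x : series k) : Prop :=
  R x /\ x 0%N = 0.

Definition max_ideal_sq (k : fieldType) (R : series k -> Prop) (x : series k) : Prop :=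
  exists ps : list (series k * series k),
    (forall p, In p ps -> max_ideal R p.1 /\ max_ideal R p.2) /\ x = sum_prods ps.

Definition conductor (k : fieldType) (R : series k -> Prop) (x : series k) : Prop :=
  forall y : series k, R (smul x y).

Definition conductor_degree (k : fieldType) (R : series k -> Prop) (c : nat) : Prop :=
  forall x : series k, conductor R x <-> (forall i, (i < c)%N -> x i = 0).

Definition has_val (k : fieldType) (f : series k) (a : nat) : Prop :=
  f a <> 0 /\ forall i, (i < a)%N -> f i = 0.

Definition vals (k : fieldType) (A : series k -> Prop) (a : nat) : Prop :=
  exists f, A f /\ has_val f a.

Definition in_HK (k : fieldType) (R : series k -> Prop) (a : nat) : Prop :=
  vals (max_ideal R) a /\ ~ vals (max_ideal_sq R) a.

Definition last_HK (k : fieldType) (R : series k -> Prop) (a : nat) : Prop :=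
  in_HK R a /\ forall b, in_HK R b -> (b <= a)%N.

(* Main.v *)
Require Import Defs.
From mathcomp Require Import all_boot all_order all_algebra.
From Stdlib Require Import List Classical FunctionalExtensionality.
Set Implicit Arguments. Unset Strict Implicit. Unset Printing Implicit Defensive.
Import GRing.Theory.
Local Open Scope ring_scope.

Definition ts (k : fieldType) (s : nat) : series k := fun n => if n == s then 1 else 0.
Definition sscale (k : fieldType) (a : k) (f : series k) : series k := fun n => a * f n.

Lemma smul_const_l (k : fieldType) (a : k) f : smul (sconst a) f = sscale a f.
Proof.
apply: functional_extensionality => n; rewrite /smul /sscale big_ord_recl /= subn0.
by rewrite big1 ?addr0 // => i _; rewrite /bump add1n mul0r.
Qed.

Lemma smul_1_r (k : fieldType) (f : series k) : smul f (sconst 1) = f.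
Proof.
apply: functional_extensionality => n; rewrite /smul big_ord_recr /= subnn mulr1.
rewrite big1 ?add0r // => i _.
by case: i => i /= Hi; rewrite /sconst; case E: (n - i)%N => [|m] //; [move/eqP: E; rewrite subn_eq0 leqNgt Hi | rewrite mulr0].
Qed.

Lemma smul_scale_l (k : fieldType) (a : k) f g : smul (sscale a f) g = sscale a (smul f g).
Proof.
apply: functional_extensionality => n; rewrite /smul /sscale mulr_sumr.
by apply: eq_bigr => i _; rewrite mulrA.
Qed.

Lemma sum_prods_app (k : fieldType) (ps qs : list (series k * series k)) n :
  sum_prods (ps ++ qs) n = sum_prods ps n + sum_prods qs n.
Proof.
elim: ps => [|p ps IH] /=; first by rewrite /szero add0r.
by rewrite /sadd IH addrA.
Qed.

Lemma sum_prods_scale (k : fieldType) (a : k) (ps : list (series k * series k)) n :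
  sum_prods (map (fun p => (sscale a p.1, p.2)) ps) n = a * sum_prods ps n.
Proof.
elim: ps => [|p ps IH] /=; first by rewrite /szero mulr0.
by rewrite /sadd IH smul_scale_l /sscale mulrDr.
Qed.

Lemma smul_ts (k : fieldType) (c : nat) (f : series k) :
  (forall i, (i < c)%N -> f i = 0) -> smul (ts k c) (fun n => f (n + c)%N) = f.
Proof.
move=> Hf; apply: functional_extensionality => n; rewrite /smul.
case: (ltnP n c) => Hn.
  rewrite Hf // big1 // => i _; rewrite /ts.
  by case: eqP => [Ei|]; [move: (ltn_ord i); rewrite Ei ltnS leqNgt Hn | rewrite mul0r].
have Hc : (c < n.+1)%N by rewrite ltnS.
rewrite (bigD1 (Ordinal Hc)) //= big1 ?addr0.
  by rewrite /ts eqxx mul1r subnK.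
move=> i /eqP Hi; rewrite /ts; case: eqP => [E|]; last by rewrite mul0r.
by exfalso; apply: Hi; apply: val_inj.
Qed.

Theorem mainTheorem7 (k : fieldType) (R : series k -> Prop)
  (hR : subalgebra R) (hfin : finite_over R) (hbir : birational R)
  (c : nat) (hc : conductor_degree R c) (an : nat) (han : last_HK R an) :
  ~ (forall x, conductor R x -> max_ideal_sq R x) <-> (c <= an)%N.
Proof.
have CR : forall x, conductor R x -> R x.
  by move=> x Hx; have := Hx (sconst 1); rewrite smul_1_r.
split; last first.
  move=> Hle H; apply: han.1.2; exists (ts k an); split.
    apply: H; apply/hc => i Hi; rewrite /ts; case: eqP => // E.
    by move: Hi; rewrite E ltnNge Hle.
  split; first by rewrite /ts eqxx; apply/eqP; exact: oner_neq0.
  by move=> i Hi; rewrite /ts; case: eqP => // E; move: Hi; rewrite E ltnn.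
move=> H; apply/negP => /negP; rewrite -ltnNge => Hlt; apply: H.
have c1 : (0 < c)%N by apply: leq_ltn_trans Hlt.
have base : forall f : series k, (forall i, (i < c + c)%N -> f i = 0) -> max_ideal_sq R f.
  move=> f Hf.
  have Hf' : forall i, (i < c)%N -> f i = 0 by move=> i Hi; apply: Hf; apply: ltn_addr.
  exists [:: (ts k c, fun n => f (n + c)%N)]; split.
    move=> p [<-|[]] /=; split.
    - split; last by rewrite /ts; case: eqP => // E; move: c1; rewrite -E.
      apply: CR; apply/hc => i Hi; rewrite /ts; case: eqP => // E; move: Hi; rewrite E ltnn //.
    - split; last by rewrite add0n; apply: Hf; rewrite -[X in (X < _)%N]addn0 ltn_add2l.
      apply: CR; apply/hc => i Hi; apply: Hf; rewrite ltn_add2r //.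
  by rewrite /= /sadd; apply: functional_extensionality => n; rewrite /szero addr0 smul_ts.
have step : forall j s (f : series k), (c + c <= s + j)%N -> (c <= s)%N ->
    (forall i, (i < s)%N -> f i = 0) -> max_ideal_sq R f.
  elim=> [|j IH] s f Hs Hcs Hf.
    by apply: base => i Hi; apply: Hf; apply: leq_trans Hi _; rewrite addn0 in Hs.
  have s1 : (0 < s)%N by apply: leq_trans Hcs.
  have vm : vals (max_ideal R) s.
    exists (ts k s); split; last first.
      split; first by rewrite /ts eqxx; apply/eqP; exact: oner_neq0.
      by move=> i Hi; rewrite /ts; case: eqP => // E; move: Hi; rewrite E ltnn.
    split; last by rewrite /ts; case: eqP => // E; move: s1; rewrite -E.
    apply: CR; apply/hc => i Hi; rewrite /ts; case: eqP => // E.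
    by move: Hi; rewrite E ltnNge Hcs.
  have vm2 : vals (max_ideal_sq R) s.
    apply: NNPP => N.
    have := han.2 s (conj vm N) => Hsa.
    by move: (leq_ltn_trans Hsa Hlt); rewrite ltnNge Hcs.
  case: vm2 => g [[qs [Hqs Eg]] [Hgs Hgi]].
  pose lam := f s / g s.
  pose f' : series k := fun n => f n - lam * g n.
  have [ps [Hps Ef']] : max_ideal_sq R f'.
    apply: (IH s.+1) => //.
    - by rewrite addSnnS.
    - by apply: leq_trans Hcs _.
    move=> i; rewrite ltnS leq_eqVlt => /orP [/eqP ->|Hi].
      rewrite /f' /lam divfK; [exact: subrr | exact/eqP].
    rewrite /f' Hf // Hgi // mulr0; exact: subrr.
  exists (ps ++ map (fun p => (sscale lam p.1, p.2)) qs); split.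
    move=> p Hp; case: (in_app_or _ _ _ Hp) => [/Hps //|]; move=> /in_map_iff [q [<- Hq]] /=.
    have [[R1 z1] H2] := Hqs q Hq; split => //; split.
      by rewrite -smul_const_l; apply: sub_mul => //; apply: sub_const.
    by rewrite /sscale z1 mulr0.
  apply: functional_extensionality => n.
  by rewrite sum_prods_app sum_prods_scale -Ef' -Eg /f' subrK.
move=> x Hx; apply: (step c c) => //.
by move=> i Hi; move/hc: Hx; apply.
Qed.
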